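(* Let $\mathfrak{X}$ be a Bourgain–Delbaen space determined by $(\Gamma_q,i_q)_q$ and let $\Gamma'$ be a self-determined subset of $\Gamma$. For $q\in\mathbb{N}$ let $\Gamma_q''=\Gamma_q\setminus\Gamma'$. Then for every $q\in\mathbb{N}$, $i_q[\ell_\infty(\Gamma_q'')]=\langle\{d_\gamma:\gamma\in\Gamma_q''\}\rangle$, where $\ell_\infty(\Gamma_q'')$ is naturally identified with a subspace of $\ell_\infty(\Gamma_q)$. In particular, the closed linear span $Y$ of $\{d_\gamma:\gamma\in\Gamma\setminus\Gamma'\}$ is a $\mathscr{L}_\infty$-space.
   Context: Bourgain–Delbaen spaces: $(\Gamma_q)_{q\geqslant1}$ is a strictly increasing sequence of non-empty finite sets, $\Gamma=\bigcup_q\Gamma_q$, and $i_q:\ell_\infty(\Gamma_q)\to\ell_\infty(\Gamma)$ are linear extension operators (i.e. $i_q(x)|_{\Gamma_q}=x$) with $\sup_q\|i_q\|<\infty$, which are compatible: for $p<q$, $i_p=i_q\circ r_q\circ i_p$, where $r_q$ is restriction to $\Gamma_q$. Set $\Delta_1=\Gamma_1$, $\Delta_{q+1}=\Gamma_{q+1}\setminus\Gamma_q$, and for $\gamma\in\Delta_q$ let $d_\gamma=i_q(e_\gamma)$; $\mathfrak{X}$ is the closed span of $\{d_\gamma\}$ in $\ell_\infty(\Gamma)$. For $\gamma\in\Gamma$, $e_\gamma^*$ is evaluation at $\gamma$ restricted to $\mathfrak{X}$ and $(d_\gamma^* )$ are the functionals biorthogonal to $(d_\gamma)$. An infinite subset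 $\Gamma'\subseteq\Gamma$ is self-determined if each $d_\gamma^*$, $\gamma\in\Gamma'$, lies in the linear span of $\{e_\eta^*:\eta\in\Gamma'\}$. A Banach space is a $\mathscr{L}_\infty$-space if for some $\lambda$ every finite-dimensional subspace is contained in a finite-dimensional subspace $F$ that is $\lambda$-isomorphic to $\ell_\infty^{\dim F}$. $\langle\cdot\rangle$ denotes linear span. *)

(* Defs.v *)
From mathcomp Require Import all_boot all_order all_algebra.
From mathcomp Require Import all_classical all_reals.
Unset Implicit Arguments. Unset Strict Implicit. Unset Printing Implicit Defensive.
Import Order.TTheory GRing.Theory Num.Theory.
Local Open Scope ring_scope.
Local Open Scope classical_set_scope.

Section BD.
Variables (R : realType) (Gamma : eqType).

(* elements of Gamma_q, and ell_oo(Gamma_q) = functions on Gamma_q *)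
Definition sub (Gam : nat -> set Gamma) (q : nat) := {g : Gamma | Gam q g}.

(* sup-norm bound written without sup:  ||x||_oo <= M *)
Definition normle (I : Type) (x : I -> R) (M : R) := forall k, `|x k| <= M.

Definition Delta (Gam : nat -> set Gamma) (q : nat) : set Gamma :=
  if q is p.+1 then Gam p.+1 `\` Gam p else Gam 0%N.

Definition ev (Gam : nat -> set Gamma) (q : nat) (g : Gamma) : sub Gam q -> R :=
  fun s => if proj1_sig s == g then 1 else 0.

Definition BD_data (Gam : nat -> set Gamma)
  (i : forall q, (sub Gam q -> R) -> Gamma -> R) : Prop :=
  (forall q, finite_set (Gam q) /\ Gam q !=set0) /\
      (forall q, Gam q `<` Gam q.+1) /\
      (forall g, exists q, Gam q g) /\
      (forall q (a : R) (x y : sub Gam q -> R),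
          i q (fun s => a * x s + y s) = (fun g => a * i q x g + i q y g)) /\
      (forall q x (s : sub Gam q), i q x (proj1_sig s) = x s) /\
      (exists C : R, forall q (x : sub Gam q -> R) (M : R),
          normle _ x M -> normle _ (i q x) (C * M)) /\
    (forall p q (x : sub Gam p -> R), (p < q)%N ->
          i p x = i q (fun s : sub Gam q => i p x (proj1_sig s))).

Definition dset (Gam : nat -> set Gamma)
  (i : forall q, (sub Gam q -> R) -> Gamma -> R) (A : set Gamma) : set (Gamma -> R) :=
  [set y | exists q g, [/\ Delta Gam q g, A g & y = i q (ev Gam q g)]].

Definition lspan (S : set (Gamma -> R)) : set (Gamma -> R) :=
  [set y | exists (n : nat) (a : 'I_n -> R) (v : 'I_n -> Gamma -> R),
     (forall k, S (v k)) /\ y = (fun g => \sum_(k < n) a k * v k g)].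

Definition closed_span (S : set (Gamma -> R)) : set (Gamma -> R) :=
  [set y | (exists M, normle _ y M) /\
     forall eps : R, 0 < eps -> exists z, lspan S z /\ normle _ (fun g => y g - z g) eps].

(* Gamma' is self-determined: infinite, and for gamma in Gamma', d*_gamma lies in
   the linear lspan of {e*_eta : eta in Gamma'}, i.e. some functional
   sum_j a_j e*_{eta_j} (eta_j in Gamma') is biorthogonal to (d_delta)
   at gamma:  it takes the value [delta = gamma] at every d_delta. *)
Definition self_determined (Gam : nat -> set Gamma)
  (i : forall q, (sub Gam q -> R) -> Gamma -> R) (G' : set Gamma) : Prop :=
  infinite_set G' /\
  forall g, G' g -> exists (n : nat) (a : 'I_n -> R) (eta : 'I_n -> Gamma),
     (forall j, G' (eta j)) /\
     forall q d, Delta Gam q d ->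
       \sum_(j < n) a j * i q (ev Gam q d) (eta j) = (if d == g then 1 else 0).

Definition fdspan (m : nat) (v : 'I_m -> Gamma -> R) := lspan [set v k | k in [set: 'I_m]].

Definition Linfty_space (Y : set (Gamma -> R)) : Prop :=
  exists lam : R, forall (m : nat) (v : 'I_m -> Gamma -> R), (forall k, Y (v k)) ->
    exists (m' : nat) (w : 'I_m' -> Gamma -> R),
      [/\ (forall k, Y (w k)), fdspan _ v `<=` fdspan _ w &
      (* F := fdspan _ w is lam-isomorphic to ell_oo^n, n = dim F *)
      exists (n : nat) (T : (Gamma -> R) -> 'I_n -> R) (S : ('I_n -> R) -> Gamma -> R)
             (a b : R),
        (forall c x y, fdspan _ w x -> fdspan _ w y ->
               T (fun g => c * x g + y g) = (fun k => c * T x k + T y k)) /\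
            (forall c u u', S (fun k => c * u k + u' k) = (fun g => c * S u g + S u' g)) /\
            (forall x, fdspan _ w x -> S (T x) = x) /\
            (forall u, fdspan _ w (S u) /\ T (S u) = u) /\
            (forall x M, fdspan _ w x -> normle _ x M -> normle _ (T x) (a * M)) /\
            (forall u M, normle _ u M -> normle _ (S u) (b * M)) /\
            a * b <= lam].

End BD.
Arguments sub {Gamma}.
Arguments normle {R I}.
Arguments Delta {Gamma}.
Arguments ev {R Gamma}.
Arguments BD_data {R Gamma}.
Arguments dset {R Gamma}.
Arguments lspan {R Gamma}.
Arguments closed_span {R Gamma}.
Arguments self_determined {R Gamma}.
Arguments fdspan {R Gamma}.
Arguments Linfty_space {R Gamma}.

(* Main.v *)
Require Import Defs.
From mathcomp Require Import all_boot all_order all_algebra.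
From mathcomp Require Import all_classical all_reals.
From mathcomp Require Import ring lra.
Import Order.TTheory GRing.Theory Num.Theory.
Local Open Scope ring_scope.
Local Open Scope classical_set_scope.
Set Implicit Arguments. Unset Strict Implicit.

Lemma sum_ind (R : realType) (T : eqType) (l : seq T) (F : T -> R) (a : T) :
  uniq l -> \sum_(g <- l) F g * (if a == g then 1 else 0) = if a \in l then F a else 0.
Proof.
move=> ul.
have -> : \sum_(g <- l) F g * (if a == g then 1 else 0) = \sum_(g <- l | g == a) F g.
  rewrite [RHS]big_mkcond /=; apply: eq_bigr => g _.
  by rewrite eq_sym; case: (g == a); rewrite ?mulr1 ?mulr0.
case: ifP => al.
  rewrite (big_rem a al) /= eqxx big1_seq ?addr0 // => g /andP [/eqP -> ga].
  by rewrite mem_rem_uniqF in ga.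
rewrite big1_seq // => g /andP [/eqP -> ga]; by rewrite ga in al.
Qed.

Lemma group (R : realType) (T : eqType) n (Pj : 'I_n -> bool) (a : 'I_n -> R)
  (eta : 'I_n -> T) (c : R) (e0 : T) :
  (forall k, \sum_(j < n | Pj j) a j * (if eta j == k then 1 else 0)
        = c * (if k == e0 then 1 else 0)) ->
  forall F : T -> R, \sum_(j < n | Pj j) a j * F (eta j) = c * F e0.
Proof.
move=> H F.
pose u := undup [seq eta j | j <- enum 'I_n].
have uu : uniq u by apply: undup_uniq.
have inu j : eta j \in u by rewrite mem_undup; apply: map_f; rewrite mem_enum.
have E : forall j, F (eta j) = \sum_(k <- u) F k * (if eta j == k then 1 else 0).
  by move=> j; rewrite sum_ind // inu.
under eq_bigr => j _ do rewrite E big_distrr /=.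
rewrite exchange_big /=.
under eq_bigr => k _.
  have -> : \sum_(i < n | Pj i) a i * (F k * (if eta i == k then 1 else 0))
     = F k * (c * (if k == e0 then 1 else 0)).
    by rewrite -H big_distrr /=; apply: eq_bigr => j _; rewrite mulrCA.
  over.
under eq_bigr => k _ do rewrite mulrCA (eq_sym k e0).
rewrite -big_distrr /= sum_ind //.
case: ifP => // e0u.
have := H e0; rewrite eqxx mulr1 => <-.
rewrite big1 ?mul0r // => j _.
case: eqP => [ej|]; last by rewrite mulr0.
by rewrite -ej inu in e0u.
Qed.

Lemma fin_enum (T : eqType) (A B : set T) : finite_set A -> B `<=` A ->
  exists l : seq T, uniq l /\ forall g, B g <-> g \in l.
Proof.
move=> /finite_seqP [s As] BA.
exists (undup [seq g <- s | `[< B g >]]); split; first exact: undup_uniq.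
move=> g; rewrite mem_undup mem_filter; split.
  move=> Bg; apply/andP; split; first exact: asboolT.
  by have := BA g Bg; rewrite As.
by case/andP => /asboolP.
Qed.

Section Span.
Variables (R : realType) (Gamma : eqType) (S : set (Gamma -> R)).

Lemma lspan0 : lspan S (fun _ => 0).
Proof.
exists 0%N, (fun _ => 0), (fun _ _ => 0); split; first by case.
by apply: funext => g; rewrite big_ord0.
Qed.

Lemma lspan_in x : S x -> lspan S x.
Proof.
move=> Sx; exists 1%N, (fun _ => 1), (fun _ => x); split => //.
by apply: funext => g; rewrite big_ord1 mul1r.
Qed.

Lemma lspan_lin (a : R) x y : lspan S x -> lspan S y -> lspan S (fun g => a * x g + y g).
Proof.
move=> [n1 [a1 [v1 [S1 ->]]]] [n2 [a2 [v2 [S2 ->]]]].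
exists (n1 + n2)%N,
  (fun k => match fintype.split k with inl k1 => a * a1 k1 | inr k2 => a2 k2 end),
  (fun k => match fintype.split k with inl k1 => v1 k1 | inr k2 => v2 k2 end).
split.
  by move=> k; case: (fintype.split k).
apply: funext => g; rewrite big_split_ord /= big_distrr /=.
congr (_ + _); apply: eq_bigr => k _.
  by rewrite (unsplitK (inl k)) mulrA.
by rewrite (unsplitK (inr k)).
Qed.

Lemma lspan_sum (I : eqType) (r : seq I) (c : I -> R) (f : I -> Gamma -> R) :
  (forall j, j \in r -> lspan S (f j)) -> lspan S (fun g => \sum_(j <- r) c j * f j g).
Proof.
elim: r => [|j r IH] H.
  have -> : (fun g => \sum_(j <- [::]) c j * f j g) = (fun _ => 0).
    by apply: funext => g; rewrite big_nil.
  exact: lspan0.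
have -> : (fun g => \sum_(j0 <- j :: r) c j0 * f j0 g)
     = (fun g => c j * f j g + \sum_(j0 <- r) c j0 * f j0 g).
  by apply: funext => g; rewrite big_cons.
apply: lspan_lin; first by apply: H; rewrite inE eqxx.
by apply: IH => k kr; apply: H; rewrite inE kr orbT.
Qed.

End Span.

Lemma lspan_sub (R : realType) (Gamma : eqType) (S S' : set (Gamma -> R)) :
  S `<=` S' -> lspan S `<=` lspan S'.
Proof.
move=> SS y [n [a [v [Sv ->]]]]; exists n, a, v; split => // k; exact: SS.
Qed.
Unset Implicit Arguments.
Section Main.
Variables (R : realType) (Gamma : eqType) (Gam : nat -> set Gamma)
  (i : forall q : nat, (sub Gam q -> R) -> Gamma -> R) (G' : set Gamma) (C : R).
Hypothesis fin : forall q, finite_set (Gam q).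
Hypothesis ne : forall q, Gam q !=set0.
Hypothesis incr : forall q, Gam q `<` Gam q.+1.
Hypothesis cover : forall g, exists q, Gam q g.
Hypothesis lin : forall q (a : R) (x y : sub Gam q -> R),
          i q (fun s => a * x s + y s) = (fun g => a * i q x g + i q y g).
Hypothesis ext : forall q x (s : sub Gam q), i q x (proj1_sig s) = x s.
Hypothesis bnd : forall q (x : sub Gam q -> R) (M : R),
          normle x M -> normle (i q x) (C * M).
Hypothesis compat : forall p q (x : sub Gam p -> R), (p < q)%N ->
          i p x = i q (fun s : sub Gam q => i p x (proj1_sig s)).

Hypothesis sd : forall g, G' g -> exists (n : nat) (a : 'I_n -> R) (eta : 'I_n -> Gamma),
     (forall j, G' (eta j)) /\
     forall q d, Delta Gam q d ->
       \sum_(j < n) a j * i q (ev Gam q d) (eta j) = (if d == g then 1 else 0).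

Set Implicit Arguments. Unset Strict Implicit.

Lemma i0 q : i q (fun _ => 0) = (fun _ => 0).
Proof.
have := lin q (-1) (fun _ => 0) (fun _ => 0).
have -> : (fun _ : sub Gam q => -1 * 0 + 0) = (fun _ => 0 :> R).
  by apply: funext => s; rewrite mulr0 addr0.
move=> ->; apply: funext => g; by rewrite mulN1r addNr.
Qed.

Lemma i_sum q (I : Type) (r : seq I) (c : I -> R) (x : I -> sub Gam q -> R) :
  i q (fun s => \sum_(j <- r) c j * x j s) = fun g => \sum_(j <- r) c j * i q (x j) g.
Proof.
elim: r => [|j r IH].
  have -> : (fun s : sub Gam q => \sum_(j <- [::]) c j * x j s) = (fun _ => 0).
    by apply: funext => s; rewrite big_nil.
  by rewrite i0; apply: funext => g; rewrite big_nil.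
have -> : (fun s => \sum_(j0 <- j :: r) c j0 * x j0 s) =
   (fun s => c j * x j s + \sum_(j0 <- r) c j0 * x j0 s).
  by apply: funext => s; rewrite big_cons.
rewrite lin IH; apply: funext => g; by rewrite big_cons.
Qed.

Lemma Gam_mono s t : (s <= t)%N -> Gam s `<=` Gam t.
Proof.
elim: t => [|t IH]; first by rewrite leqn0 => /eqP ->.
rewrite leq_eqVlt => /orP [/eqP -> //|]; rewrite ltnS => /IH h.
by move=> g /h; case: (incr t) => + _; apply.
Qed.

Lemma extE q d g : Gam q g -> i q (ev Gam q d) g = if g == d then 1 else 0.
Proof. by move=> H; rewrite (ext q _ (exist (Gam q) g H)). Qed.

Lemma Delta_Gam q g : Delta Gam q g -> Gam q g.
Proof. by case: q => [|q] //= [] . Qed.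

Lemma Delta_le q p g : Delta Gam q g -> Gam p g -> (q <= p)%N.
Proof.
case: q => [|q] //= [_ H] Hp; rewrite ltnNge; apply/negP => le.
by apply: H; apply: Gam_mono Hp.
Qed.

Lemma Delta_uniq p q g : Delta Gam p g -> Delta Gam q g -> p = q.
Proof.
move=> Hp Hq; apply/eqP; rewrite eqn_leq.
by rewrite (Delta_le Hp (Delta_Gam Hq)) (Delta_le Hq (Delta_Gam Hp)).
Qed.

Lemma Delta_ex g : exists q, Delta Gam q g.
Proof.
have ex : exists q, `[< Gam q g >] by case: (cover g) => q h; exists q; apply/asboolP.
pose q := ex_minn ex.
case: (ex_minnP ex) => m /asboolP Hm minm.
case: m Hm minm => [|m] Hm minm; first by exists 0%N.
exists m.+1; split => // H.
have := minm m (asboolT H); by rewrite ltnn.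
Qed.

Definition P q (z : Gamma -> R) := i q (fun s => z (proj1_sig s)).

Lemma P_i p q x : (p <= q)%N -> P q (i p x) = i p x.
Proof.
rewrite leq_eqVlt => /orP [/eqP <-|lt]; last by rewrite /P -compat.
rewrite /P; congr (i p); apply: funext => s; exact: ext.
Qed.

Lemma P_on q z g : Gam q g -> P q z g = z g.
Proof. by move=> H; rewrite /P (ext q _ (exist (Gam q) g H)). Qed.


Lemma finmax n (eta : 'I_n -> Gamma) : exists N, forall j, Gam N (eta j).
Proof.
have [f Hf] := choice (fun j => cover (eta j)).
exists (\max_(j < n) f j)%N => j; apply: (Gam_mono _ (Hf j)).
exact: (@leq_bigmax_cond _ (fun _ => true) f j).
Qed.

Lemma split_top n (a : 'I_n -> R) (eta : 'I_n -> Gamma) s (F : Gamma -> R) :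
  \sum_(j < n | `[< Gam s.+1 (eta j) >]) a j * F (eta j) =
  \sum_(j < n | `[< Gam s (eta j) >]) a j * F (eta j) +
  \sum_(j < n | `[< Delta Gam s.+1 (eta j) >]) a j * F (eta j).
Proof.
rewrite (bigID (fun j => `[< Gam s (eta j) >])) /=; congr (_ + _); apply: eq_bigl => j.
  case: (asboolP (Gam s (eta j))) => h; rewrite ?andbT ?andbF //.
  by apply/asboolP; apply: (Gam_mono (leqnSn s)).
case: (asboolP (Gam s (eta j))) => h; rewrite ?andbT ?andbF /=.
  by symmetry; apply/asboolP => -[].
case: (asboolP (Gam s.+1 (eta j))) => h'; symmetry.
  by apply/asboolP.
by apply/asboolP => -[].
Qed.

Lemma top_coef n (a : 'I_n -> R) (eta : 'I_n -> Gamma) s k : Delta Gam s.+1 k ->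
  \sum_(j < n | `[< Gam s.+1 (eta j) >]) a j * i s.+1 (ev Gam s.+1 k) (eta j) =
  \sum_(j < n | `[< Delta Gam s.+1 (eta j) >]) a j * (if eta j == k then 1 else 0).
Proof.
move=> [Hk nk].
rewrite split_top big1 ?add0r; last first.
  move=> j /asboolP h; rewrite extE; last by apply: (Gam_mono (leqnSn s)).
  case: eqP => [e|]; last by rewrite mulr0.
  by rewrite e in h.
apply: eq_bigr => j /asboolP [h _]; by rewrite extE.
Qed.

Lemma top_zero n (a : 'I_n -> R) (eta : 'I_n -> Gamma) s k : ~ Delta Gam s.+1 k ->
  \sum_(j < n | `[< Delta Gam s.+1 (eta j) >]) a j * (if eta j == k then 1 else 0) = 0.
Proof.
move=> nk; rewrite big1 // => j /asboolP h.
case: eqP => [e|]; last by rewrite mulr0.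
by rewrite e in h.
Qed.

Lemma reduce g p n (a : 'I_n -> R) (eta : 'I_n -> Gamma) : Gam p g ->
  (forall q d, Delta Gam q d -> \sum_(j < n) a j * i q (ev Gam q d) (eta j) = (if d == g then 1 else 0)) ->
  forall q d, Delta Gam q d ->
   \sum_(j < n | `[< Gam p (eta j) >]) a j * i q (ev Gam q d) (eta j) = (if d == g then 1 else 0).
Proof.
move=> gp H.
pose f s := forall q d, Delta Gam q d ->
   \sum_(j < n | `[< Gam s (eta j) >]) a j * i q (ev Gam q d) (eta j) = (if d == g then 1 else 0).
have [N HN] := finmax eta.
have big s : (N <= s)%N -> f s.
  move=> Ns q d Hd; rewrite -(H q d Hd); apply: eq_bigl => j; apply/asboolP.
  exact: (Gam_mono Ns (HN j)).
have step s : (p <= s)%N -> f s.+1 -> f s.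
  move=> ps fs1.
  have topz : forall F : Gamma -> R,
      \sum_(j < n | `[< Delta Gam s.+1 (eta j) >]) a j * F (eta j) = 0 * F g.
    apply: group => k; rewrite mul0r.
    have [Dk|nDk] := pselect (Delta Gam s.+1 k); last exact: top_zero.
    have := fs1 _ _ Dk; rewrite top_coef //.
    have -> : (k == g) = false.
      apply/negP => /eqP e; case: Dk => _; apply; rewrite e.
      exact: (Gam_mono ps gp).
    done.
  move=> q d Hd; rewrite -(fs1 q d Hd) split_top topz mul0r addr0 //.
have gen m : forall k, (N <= p + k + m)%N -> f (p + k)%N.
  elim: m => [|m IH] k Hk; first by apply: big; rewrite addn0 in Hk.
  apply: step; first exact: leq_addr.
  have -> : (p + k).+1 = (p + k.+1)%N by rewrite addnS.
  apply: IH; by rewrite addnS addSn -addnS.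
have := gen N 0%N; rewrite addn0; apply; exact: leq_addl.
Qed.

Lemma keyQ t eta : G' eta -> Gam t eta -> forall q g, Delta Gam q g -> ~ G' g ->
  i q (ev Gam q g) eta = 0.
Proof.
have easy e q g : G' e -> Gam q e -> ~ G' g -> i q (ev Gam q g) e = 0.
  move=> He Hq ng; rewrite extE //; case: eqP => // E; by rewrite E in He.
elim: t eta => [|t IH] eta He Ht q g Hg ng.
  by apply: easy => //; apply: (Gam_mono (leq0n q)).
have [Ht'|nt] := pselect (Gam t eta); first exact: (IH eta).
have [n [a [et [G'et Hsd]]]] := sd eta He.
have red := reduce Ht Hsd.
have top : forall F : Gamma -> R,
    \sum_(j < n | `[< Delta Gam t.+1 (et j) >]) a j * F (et j) = 1 * F eta.
  apply: group => k.
  have [Dk|nDk] := pselect (Delta Gam t.+1 k).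
    by rewrite -top_coef // red // mul1r.
  rewrite top_zero // mul1r; case: eqP => // E; exfalso; apply: nDk; rewrite E.
  by split.
have := red q g Hg; rewrite split_top top mul1r.
rewrite big1 ?add0r; first by move=> ->; case: eqP => // E; case: ng; rewrite E.
move=> j /asboolP Hj; rewrite (IH (et j)) ?mulr0 //.
Qed.


Lemma dset_mono A B : A `<=` B -> dset Gam i A `<=` dset Gam i B.
Proof. by move=> AB y [q [g [H1 H2 H3]]]; exists q, g; split => //; apply: AB. Qed.

Lemma dset_vanish A y : A `<=` ~` G' -> lspan (dset Gam i A) y -> forall e, G' e -> y e = 0.
Proof.
move=> AG [n [a [v [Sv ->]]]] e He; rewrite big1 // => k _.
have [q [g [Hg Ag ->]]] := Sv k.
have [t Ht] := cover e.
by rewrite (keyQ He Ht Hg (AG g Ag)) mulr0.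
Qed.

Lemma vanish_q q y e : lspan (dset Gam i (Gam q `\` G')) y -> G' e -> y e = 0.
Proof. by move=> L; apply: (dset_vanish _ L) => g [_ ?]. Qed.

Lemma P_sum q n (a : 'I_n -> R) (v : 'I_n -> Gamma -> R) :
  P q (fun g => \sum_(k < n) a k * v k g) = fun g => \sum_(k < n) a k * P q (v k) g.
Proof. by rewrite /P i_sum. Qed.

Lemma lspan_P q A y : A `<=` Gam q -> lspan (dset Gam i A) y -> P q y = y.
Proof.
move=> AG [n [a [v [Sv ->]]]]; rewrite P_sum; apply: funext => g.
apply: eq_bigr => k _; have [p [d [Hd Ad ->]]] := Sv k.
by rewrite P_i // (Delta_le Hd (AG d Ad)).
Qed.

Lemma decomp q (Y0 : Gamma -> R) (x : sub Gam q -> R) :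
  lspan (dset Gam i (Gam q `\` G')) Y0 -> P q Y0 = Y0 ->
  (forall s, ~ Delta Gam q (proj1_sig s) -> Y0 (proj1_sig s) = x s) ->
  (forall s, G' (proj1_sig s) -> x s = 0) ->
  lspan (dset Gam i (Gam q `\` G')) (i q x).
Proof.
move=> LY PY HY Hx.
have [l [ul Hl]] := fin_enum (fin q) (B := Delta Gam q `&` ~` G')
  (fun g => fun H => Delta_Gam (proj1 H)).
pose X := i q x.
have Ex : x = fun s => 1 * Y0 (proj1_sig s) +
   \sum_(g <- l) (X g - Y0 g) * ev Gam q g s.
  apply: funext => s; rewrite mul1r /ev sum_ind //.
  have [D|nD] := pselect (Delta Gam q (proj1_sig s)); last first.
    case: ifP => [/Hl [] //|_]; by rewrite addr0 HY.
  have [G|nG] := pselect (G' (proj1_sig s)).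
    case: ifP => [/Hl [] //|_]; rewrite addr0 Hx //.
    by rewrite (vanish_q LY).
  case: ifP => [_|]; last by move=> /negP; case; apply/Hl.
  by rewrite /X ext addrC subrK.
rewrite Ex lin i_sum.
have -> : i q (fun s => Y0 (proj1_sig s)) = Y0 by exact: PY.
apply: lspan_lin => //; apply: lspan_sum => g gl; apply: lspan_in.
have [D nG] := proj2 (Hl g) gl.
exists q, g; split => //; split => //; exact: Delta_Gam.
Qed.

Lemma part1b q x : (forall s, G' (proj1_sig s) -> x s = 0) ->
  lspan (dset Gam i (Gam q `\` G')) (i q x).
Proof.
elim: q x => [|p IH] x Hx.
  apply: (decomp (Y0 := fun _ => 0)) => //.
  - exact: lspan0.
  - by rewrite /P i0.
  - by move=> s nD; exfalso; apply: nD; case: s.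
pose Y0 := i p (fun s => i p.+1 x (proj1_sig s)).
have rG (s : sub Gam p) : Gam p.+1 (proj1_sig s) by case: s => g H; apply: (Gam_mono (leqnSn p)).
apply: (decomp (Y0 := Y0)) => //.
- apply: (lspan_sub (dset_mono _)); last apply: IH.
    by move=> g [H1 H2]; split => //; apply: (Gam_mono (leqnSn p)).
  move=> s Hs; rewrite (ext p.+1 x (exist (Gam p.+1) (proj1_sig s) (rG s))).
  exact: Hx.
- by rewrite /Y0 P_i.
- move=> s nD; have Hp : Gam p (proj1_sig s).
    apply: contrapT => nH; apply: nD; split => //; exact: (proj2_sig s).
  by rewrite /Y0 (ext p _ (exist (Gam p) (proj1_sig s) Hp)) /= ext.
Qed.

Lemma part1 q :
  [set i q x | x in [set x : sub Gam q -> R | forall s, G' (proj1_sig s) -> x s = 0]]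
     = lspan (dset Gam i (Gam q `\` G')).
Proof.
apply/seteqP; split => y.
  by case=> x Hx <-; apply: part1b.
move=> Ly; exists (fun s => y (proj1_sig s)).
  move=> s Hs /=; exact: (vanish_q Ly).
exact: (lspan_P (fun g H => proj1 H) Ly).
Qed.


Lemma Cge0 : 0 <= C.
Proof.
have [g _] := ne 0.
have := bnd 0 (fun _ => 0) 1 _ g.
rewrite i0 normr0 mulr1; apply => k; by rewrite normr0.
Qed.

Definition Y := closed_span (dset Gam i (~` G')).

Lemma Y_vanish y e : Y y -> G' e -> y e = 0.
Proof.
move=> [_ H] He; apply/eqP; rewrite -normr_le0; apply/ler_addgt0Pr => eps eps0.
rewrite add0r; have [z [Lz Nz]] := H eps eps0.
have := Nz e; by rewrite (dset_vanish (fun g (h : (~` G') g) => h) Lz) // subr0.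
Qed.

Lemma lspan_Y y : lspan (dset Gam i (~` G')) y -> Y y.
Proof.
move=> Ly; split; last by move=> eps eps0; exists y; split => // g; rewrite subrr normr0 ltW.
case: Ly => n [a [v [Sv ->]]].
exists (\sum_(k < n) `|a k| * C) => g.
apply: (le_trans (ler_norm_sum _ _ _)); apply: ler_sum => k _.
rewrite normrM; apply: ler_wpM2l => //.
have [p [d [Hd _ ->]]] := Sv k.
have := bnd p (ev Gam p d) 1; rewrite mulr1; apply => //.
by move=> s; rewrite /ev; case: ifP; rewrite ?normr1 ?normr0.
Qed.

Lemma Y_lin (a : R) x y : Y x -> Y y -> Y (fun g => a * x g + y g).
Proof.
move=> [[Mx Hx] Ax] [[My Hy] Ay]; split.
  exists (`|a| * Mx + My) => g; apply: (le_trans (ler_normD _ _)).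
  by apply: lerD => //; rewrite normrM; apply: ler_wpM2l.
move=> eps eps0.
have e1 : 0 < eps / (2 * (`|a| + 1)) by apply: divr_gt0 => //; apply: mulr_gt0 => //; apply: ltr_wpDl.
have e2 : 0 < eps / 2 by apply: divr_gt0.
have [zx [Lx Nx]] := Ax _ e1; have [zy [Ly Ny]] := Ay _ e2.
exists (fun g => a * zx g + zy g); split; first exact: lspan_lin.
move=> g.
have -> : a * x g + y g - (a * zx g + zy g) = a * (x g - zx g) + (y g - zy g) by ring.
apply: (le_trans (ler_normD _ _)); rewrite normrM.
have h1 : `|a| * `|x g - zx g| <= eps / 2.
  apply: (le_trans (ler_wpM2l (normr_ge0 a) (Nx g))).
  apply: (le_trans (y := (`|a| + 1) * (eps / (2 * (`|a| + 1))))).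
    by apply: ler_wpM2r; [exact: ltW | rewrite lerDl].
  have an : `|a| + 1 != 0 by rewrite gt_eqF // ltr_wpDl.
  have -> : (`|a| + 1) * (eps / (2 * (`|a| + 1))) = eps / 2 by field.
  done.
have := lerD h1 (Ny g); by rewrite -splitr.
Qed.

Lemma Y_comb (a b : R) x y : Y x -> Y y -> Y (fun g => a * x g + b * y g).
Proof.
move=> Yx Yy.
have Y0 : Y (fun _ => 0) by apply: lspan_Y; apply: lspan0.
have Yby : Y (fun g => b * y g) by have := Y_lin b Yy Y0; under eq_fun do rewrite addr0.
exact: Y_lin.
Qed.

Lemma Y_sum (I : Type) (r : seq I) (c : I -> R) (f : I -> Gamma -> R) :
  (forall j, Y (f j)) -> Y (fun g => \sum_(j <- r) c j * f j g).
Proof.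
move=> H; elim: r => [|j r IH].
  under eq_fun do rewrite big_nil. by apply: lspan_Y; apply: lspan0.
under eq_fun do rewrite big_cons. exact: Y_lin.
Qed.

Lemma lspan_stable A z : lspan (dset Gam i A) z -> exists Q, forall q, (Q <= q)%N -> P q z = z.
Proof.
case=> n [a [v [Sv ->]]].
have [f Hf] := choice Sv.
exists (\max_(k < n) f k)%N => q Qq; rewrite P_sum; apply: funext => g.
apply: eq_bigr => k _; have [d [Hd Ad ->]] := Hf k.
rewrite P_i //; apply: leq_trans Qq; exact: (@leq_bigmax_cond _ (fun _ => true) f k).
Qed.

Lemma approx y eps : Y y -> 0 < eps -> exists Q, forall q, (Q <= q)%N ->
  normle (fun g => y g - P q y g) eps.
Proof.
move=> [_ Ay] eps0.
have C0 := Cge0.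
have e1 : 0 < eps / (1 + C) by apply: divr_gt0 => //; apply: ltr_pwDl.
have [z [Lz Nz]] := Ay _ e1.
have [Q HQ] := lspan_stable Lz.
exists Q => q Qq g.
have E : y g - P q y g = (y g - z g) + P q (fun g => -1 * y g + z g) g.
  rewrite /P lin -/(P q y) -/(P q z) HQ //; ring.
rewrite E; apply: (le_trans (ler_normD _ _)).
have B : `|P q (fun g => -1 * y g + z g) g| <= C * (eps / (1 + C)).
  apply: bnd => s; rewrite mulN1r addrC -normrN opprB; exact: Nz.
apply: (le_trans (lerD (Nz g) B)).
have n1 : 1 + C != 0 by rewrite gt_eqF // ltr_pwDl.
have -> : eps / (1 + C) + C * (eps / (1 + C)) = eps by field.
done.
Qed.

Lemma interp m (v : 'I_m -> Gamma -> R) : (forall k, Y (v k)) ->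
  exists k (lam : 'I_k -> Gamma) (b : 'I_k -> Gamma -> R), (forall l, Y (b l)) /\
    forall j, v j = fun g => \sum_(l < k) v j (lam l) * b l g.
Proof.
elim: m v => [|m IH] v Hv.
  have [g0 _] := ne 0.
  by exists 0%N, (fun _ => g0), (fun _ _ => 0); split => // -[].
have [k [lam [b [Yb Hb]]]] := IH (fun j => v (lift ord0 j)) (fun j => Hv _).
pose vm := v ord0.
pose r := fun g => vm g - \sum_(l < k) vm (lam l) * b l g.
have [r0|rn0] := pselect (forall g, r g = 0).
  exists k, lam, b; split => // j.
  case: (unliftP ord0 j) => [j' ->|->]; first exact: Hb.
  apply: funext => g; have := r0 g; rewrite /r; move/eqP; rewrite subr_eq0 => /eqP.
  done.
have [gm rg] := proj2 (existsNP _) rn0.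
have Yr : Y r.
  have -> : r = fun g => 1 * vm g + (-1) * (\sum_(l < k) vm (lam l) * b l g).
    by apply: funext => g; rewrite /r; ring.
  apply: Y_comb; first exact: Hv.
  exact: (Y_sum (index_enum 'I_k) (fun l => vm (lam l)) Yb).
pose lam' := fun l : 'I_k.+1 => match unlift ord0 l with Some l' => lam l' | None => gm end.
pose b' := fun l : 'I_k.+1 => match unlift ord0 l with
   Some l' => fun g => b l' g - b l' gm / r gm * r g | None => fun g => r g / r gm end.
exists k.+1, lam', b'; split.
  move=> l; rewrite /b'; case: (unlift ord0 l) => [l'|].
    have -> : (fun g => b l' g - b l' gm / r gm * r g) = fun g => 1 * b l' g + (- (b l' gm / r gm)) * r g.
      by apply: funext => g; ring.
    exact: Y_comb.
  have -> : (fun g => r g / r gm) = fun g => (r gm)^-1 * r g + 0 * r g.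
    by apply: funext => g; ring.
  exact: Y_comb.
have key u g : \sum_(l < k.+1) u (lam' l) * b' l g =
    \sum_(l < k) u (lam l) * b l g + (u gm - \sum_(l < k) u (lam l) * b l gm) * r g / r gm.
  rewrite big_ord_recl /lam' /b' unlift_none.
  under eq_bigr => l _ do rewrite liftK.
  rewrite /=.
  have -> : \sum_(l < k) u (lam l) * (b l g - b l gm / r gm * r g) =
     \sum_(l < k) u (lam l) * b l g - (\sum_(l < k) u (lam l) * b l gm) * (r g / r gm).
    by rewrite big_distrl -sumrB /=; apply: eq_bigr => l _; ring.
  ring.
have rn : r gm != 0 by apply/eqP.
move=> j; apply: funext => g; rewrite key.
case: (unliftP ord0 j) => [j' ->|->].
  by rewrite -!(congr1 (fun f => f _) (Hb j')) subrr !mul0r addr0.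
have E h : \sum_(l < k) vm (lam l) * b l h = vm h - r h by rewrite /r; ring.
rewrite -/vm !E; field; exact: rn.
Qed.

Lemma Yq_Y q y : lspan (dset Gam i (Gam q `\` G')) y -> Y y.
Proof. by move=> L; apply: lspan_Y; apply: (lspan_sub (dset_mono _) L) => g [_ ?]. Qed.

Lemma PY q y : Y y -> Y (P q y).
Proof.
move=> Yy; apply: (@Yq_Y q); apply: part1b => s Hs; exact: Y_vanish.
Qed.

Lemma part2 : Linfty_space Y.
Proof.
have C0 := Cge0.
exists (2 * C) => m v Hv.
have [k [lam [b [Yb Hb]]]] := interp Hv.
have [q0 Hq0] := finmax lam.
pose eps : R := (k%:R + 1)^-1.
have eps0 : 0 < eps by rewrite invr_gt0 ltr_wpDl.
have [Qf HQ] := choice (fun l => approx (Yb l) eps0).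
pose q := maxn q0 (\max_(l < k) Qf l).
have Hlam l : Gam q (lam l) by apply: (Gam_mono _ (Hq0 l)); exact: leq_maxl.
have Hbeta l : normle (fun g => b l g - P q (b l) g) eps.
  apply: HQ; apply: leq_trans (leq_maxr q0 _).
  exact: (@leq_bigmax_cond _ (fun _ => true) Qf l).
have [g0 _] := ne 0.
have [l'' [ul Hl]] := fin_enum (fin q) (B := Gam q `\` G') (fun g H => proj1 H).
pose n := size l''.
pose gg := fun j : 'I_n => nth g0 l'' j.
have ggq j : Gam q (gg j) /\ ~ G' (gg j).
  by apply/Hl; rewrite /gg mem_nth.
have gginj j j' : (gg j == gg j') = (j == j') by rewrite /gg nth_uniq.
have ggcov g : Gam q g -> ~ G' g -> exists j, gg j = g.
  move=> H1 H2; have gl : g \in l'' by apply/Hl.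
  have hi : (index g l'' < n)%N by rewrite index_mem.
  by exists (Ordinal hi); rewrite /gg /= nth_index.
pose dd j := i q (ev Gam q (gg j)).
pose beta l := fun g => b l g - P q (b l) g.
pose Rm (y : Gamma -> R) := fun g => \sum_(l < k) y (lam l) * beta l g.
pose w j := fun g => dd j g + Rm (dd j) g.
pose xu (u : 'I_n -> R) := fun s : sub Gam q => \sum_(j < n) u j * ev Gam q (gg j) s.
have SFexp u g : \sum_(j < n) u j * w j g = i q (xu u) g + Rm (i q (xu u)) g.
  rewrite /xu i_sum /Rm /w /dd.
  under eq_bigr => j _ do rewrite mulrDr.
  rewrite big_split /=; congr (_ + _).
  under [RHS]eq_bigr => l _ do rewrite big_distrl /=.
  rewrite /Rm exchange_big /=; apply: eq_bigr => j _.
  by rewrite big_distrr /=; apply: eq_bigr => l _; rewrite !mulrA.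
have xu_in u s j : gg j = proj1_sig s -> xu u s = u j.
  move=> E; rewrite /xu (bigD1 j) //= /ev E eqxx mulr1 big1 ?addr0 // => j' nj.
  case: eqP => [E'|]; last by rewrite mulr0.
  by move: nj; rewrite -gginj E E' eqxx.
have xu_out u s : (forall j, gg j <> proj1_sig s) -> xu u s = 0.
  move=> H; rewrite /xu big1 // => j _; rewrite /ev; case: eqP => [E|]; last by rewrite mulr0.
  by case: (H j).
have Rm_gg y j : Rm y (gg j) = 0.
  rewrite /Rm big1 // => l _; by rewrite /beta P_on ?subrr ?mulr0 //; case: (ggq j).
have wgg j j' : w j (gg j') = if j' == j then 1 else 0.
  by rewrite /w Rm_gg addr0 /dd extE ?gginj //; case: (ggq j').
pose T := fun (x : Gamma -> R) (j : 'I_n) => x (gg j).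
pose SF := fun (u : 'I_n -> R) g => \sum_(j < n) u j * w j g.
have TSF u : T (SF u) = u.
  apply: funext => j; rewrite /T /SF (bigD1 j) //= wgg eqxx mulr1 big1 ?addr0 // => j' nj.
  by rewrite wgg eq_sym (negbTE nj) mulr0.
have SFw j : SF (T (w j)) = w j.
  apply: funext => g; rewrite /SF /T (bigD1 j) //= wgg eqxx mul1r big1 ?addr0 // => j' nj.
  by rewrite wgg (negbTE nj) mul0r.
have SFT x : fdspan _ w x -> SF (T x) = x.
  case=> N [c [z [Hz ->]]].
  have Hz' : forall j, exists kk, w kk = z j by move=> j; case: (Hz j) => kk _ E; exists kk.
  have [kk Hkk] := choice Hz'.
  apply: funext => g; rewrite /SF /T.
  under eq_bigr => j _ do rewrite big_distrl /=.
  rewrite exchange_big /=; apply: eq_bigr => j' _.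
  rewrite -(Hkk j').
  have := congr1 (fun f => f g) (SFw (kk j')); rewrite /SF /T /= => <-.
  by rewrite big_distrr /=; apply: eq_bigr => j _; rewrite mulrA.
have YRm y : Y (Rm y).
  apply: (Y_sum (index_enum 'I_k) (fun l => y (lam l)) (f := beta)) => l.
  have -> : beta l = fun g => 1 * b l g + (-1) * P q (b l) g.
    by apply: funext => g; rewrite /beta; ring.
  by apply: Y_comb => //; apply: PY.
have Yw j : Y (w j).
  have -> : w j = fun g => 1 * dd j g + Rm (dd j) g by apply: funext => g; rewrite mul1r.
  apply: Y_lin => //; apply: (@Yq_Y q); apply: part1b => s Hs.
  rewrite /ev; case: eqP => // E; case: (ggq j) => _; by rewrite -E.
have vSF j : v j = SF (T (v j)).
  apply: funext => g; rewrite /SF SFexp.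
  have -> : xu (T (v j)) = fun s => v j (proj1_sig s).
    apply: funext => s.
    have [G|nG] := pselect (G' (proj1_sig s)).
      rewrite (Y_vanish (Hv j) G) xu_out // => j' E.
      by case: (ggq j') => _; rewrite E.
    have [j' E] := ggcov _ (proj2_sig s) nG.
    by rewrite (xu_in _ _ _ E) /T E.
  rewrite -/(P q (v j)) /Rm.
  under eq_bigr => l _ do rewrite P_on // /beta mulrBr.
  rewrite sumrB.
  have E1 : \sum_(l < k) v j (lam l) * b l g = v j g by rewrite [in RHS](Hb j).
  have E2 : \sum_(l < k) v j (lam l) * P q (b l) g = P q (v j) g.
    by rewrite [in RHS](Hb j) P_sum.
  by rewrite E1 E2 addrC subrK.
have Mw u : fdspan _ w (SF u).
  exists n, u, w; split => // j; by exists j.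
exists n, w; split => //.
  move=> x [N [c [z [Hz ->]]]].
  apply: (@lspan_sum _ _ _ _ (index_enum 'I_N) c z) => j _.
  case: (Hz j) => jj _ <-; rewrite (vSF jj); exact: Mw.
pose bb : R := if (0 < n)%N then 2 * C else 0.
exists n, T, SF, 1, bb; split.
  by move=> c x y _ _; apply: funext => j.
split.
  move=> c u u'; apply: funext => g; rewrite /SF big_distrr -big_split /=.
  by apply: eq_bigr => j _; ring.
split; first exact: SFT.
split; first by move=> u; split; [exact: Mw | exact: TSF].
split; first by move=> x M _ Hx j; rewrite mul1r; exact: Hx.
split; last first.
  by rewrite mul1r /bb; case: ifP => // _; rewrite pmulr_rge0.
move=> u M Hu g; rewrite /bb.
case: (posnP n) => [n0|np].
  rewrite /= mul0r /SF big1 ?normr0 // => -[j' Hj'] _; by exfalso; move: Hj'; rewrite n0.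
rewrite ?np.
have M0 : 0 <= M by apply: le_trans (Hu (Ordinal np)).
rewrite /SF SFexp.
have Hx : normle (xu u) M.
  move=> s; have [[j E]|nE] := pselect (exists j, gg j = proj1_sig s).
    by rewrite (xu_in _ _ _ E).
  rewrite xu_out ?normr0 // => j E; apply: nE; by exists j.
have By := bnd _ _ _ Hx.
apply: (le_trans (ler_normD _ _)).
have -> : 2 * C * M = C * M + C * M by ring.
apply: lerD; first exact: By.
rewrite /Rm; apply: (le_trans (ler_norm_sum _ _ _)).
apply: (le_trans (y := \sum_(l < k) (C * M) * eps)).
  apply: ler_sum => l _; rewrite normrM; apply: ler_pM => //; exact: Hbeta.
rewrite sumr_const card_ord -mulr_natr -mulrA; apply: ler_piMr; first by apply: mulr_ge0.
rewrite /eps mulrC ler_pdivrMr ?mul1r ?lerDl // ltr_wpDl //.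
Qed.
End Main.

Unset Implicit Arguments.

Theorem proposition1p7 (R : realType) (Gamma : eqType) (Gam : nat -> set Gamma)
  (i : forall q : nat, (sub Gam q -> R) -> Gamma -> R) (G' : set Gamma) :
  BD_data Gam i -> self_determined Gam i G' ->
  (forall q : nat,
     [set i q x | x in [set x : sub Gam q -> R | forall s, G' (proj1_sig s) -> x s = 0]]
     = lspan (dset Gam i (Gam q `\` G'))) /\
  Linfty_space (closed_span (dset Gam i (~` G'))).
Proof.
move=> [finne [incr [cover [lin [ext [[C bnd] compat]]]]]] [_ sd].
have fin q := proj1 (finne q).
have ne q := proj2 (finne q).
split.
  exact: (part1 fin incr cover lin ext compat sd).
exact: (part2 fin ne incr cover lin ext bnd compat sd).
Qed.
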